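(* $(\mathbb{S},\sigma)$ is not a final $F$-coalgebra in $\mathbf{Met_3}^{L}$.
   Context: A tripointed metric space is a set with three distinct points $T,L,R$ and a metric bounded by $1$ in which $T,L,R$ have pairwise distance $1$. $\mathbf{Met_3}^{L}$: tripointed metric spaces with Lipschitz maps preserving $T,L,R$. Let $M=\{a,b,c\}$. $M\times X$ has metric $\tfrac12d(x,y)$ within a copy and $1$ between copies; $M\otimes X$ is the quotient metric space by the equivalence relation generated by $(b,T)\sim(a,L)$, $(a,R)\sim(c,T)$, $(c,L)\sim(b,R)$, with elements $m\otimes x$ and distinguished points $a\otimes T,b\otimes L,c\otimes R$; $F=M\otimes-$ with $(M\otimes f)(m\otimes x)=m\otimes f(x)$. The Sierpinski gasket $\mathbb{S}\subset\mathbb{R}^2$ is the unique nonempty compact set with $\mathbb{S}=\sigma_a(\mathbb{S})\cup\sigma_b(\mathbb{S})\cup\sigma_c(\mathbb{S})$, where $\sigma_a(x,y)=(x/2,y/2)+(1/4,\sqrt3/4)$, $\sigma_b(x,y)=(x/2,y/2)$, $\sigma_c(x,y)=(x/2,y/2)+(1/2,0)$, with the Euclidean metric and distinguished points $T=(1/2,\sqrt3/2)$, $L=(0,0)$, $R=(1,0)$. The map $\tau\colon M\otimes\mathbb{S}\to\mathbb{S}$, $\tau(m\otimes x)=\sigma_m(x)$, is a bijection preserving distinguished points, and $\sigma=\tau^{-1}$; $\sigma$ is a morphism in $\mathbf{Met_3}^{L}$, so $(\mathbb{S},\sigma)$ is an $F$-coalgebra there. *)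

(* Defs.v *)
From Stdlib Require Import Reals List Relations.
From mathcomp Require Import all_boot all_classical all_reals all_analysis.
From mathcomp Require Import Rstruct Rstruct_topology.




Local Open Scope R_scope.

Record M3data : Type := Build_M3data {
  mcar :> Type;
  mdist : mcar -> mcar -> R;
  mT : mcar; mL : mcar; mR : mcar }.
Arguments mdist : clear implicits.
Arguments mT : clear implicits.
Arguments mL : clear implicits.
Arguments mR : clear implicits.

Definition isMet3 (X : M3data) : Prop :=
  (forall x y : X, mdist X x y = 0 <-> x = y) /\
  (forall x y : X, mdist X x y = mdist X y x) /\
  (forall x y z : X, mdist X x z <= mdist X x y + mdist X y z) /\
  (forall x y : X, mdist X x y <= 1) /\
  mdist X (mT X) (mL X) = 1 /\ mdist X (mT X) (mR X) = 1 /\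
  mdist X (mL X) (mR X) = 1.

Definition lipschitz (A B : Type) (dA : A -> A -> R) (dB : B -> B -> R)
  (f : A -> B) : Prop :=
  exists K : R, 0 <= K /\ forall x y, dB (f x) (f y) <= K * dA x y.

Definition met3_morph (X Y : M3data) (f : X -> Y) : Prop :=
  lipschitz X Y (mdist X) (mdist Y) f /\
  f (mT X) = mT Y /\ f (mL X) = mL Y /\ f (mR X) = mR Y.

Inductive Mlab : Type := ma | mb | mc.

Definition Mlab_eq_dec (m n : Mlab) : {m = n} + {m <> n}.
Proof. decide equality. Defined.

Definition dprod (X : M3data) (p q : Mlab * X) : R :=
  if Mlab_eq_dec (fst p) (fst q) then / 2 * mdist X (snd p) (snd q) else 1.

Inductive glue0 (X : M3data) : Mlab * X -> Mlab * X -> Prop :=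
  | glueBT_AL : glue0 X (mb, mT X) (ma, mL X)
  | glueAR_CT : glue0 X (ma, mR X) (mc, mT X)
  | glueCL_BR : glue0 X (mc, mL X) (mb, mR X).

Definition teq (X : M3data) : Mlab * X -> Mlab * X -> Prop :=
  clos_refl_sym_trans _ (glue0 X).

Definition tens (X : M3data) : Type :=
  { S : Mlab * X -> Prop | exists p, S = teq X p }.

Definition tpt (X : M3data) (m : Mlab) (x : X) : tens X :=
  exist _ (teq X (m, x)) (ex_intro _ (m, x) erefl).

(* chains  (p_1,q_1),...,(p_n,q_n)  with p_1 ~ a, q_i ~ p_{i+1}, q_n ~ b *)
Fixpoint walk (X : M3data) (a b : Mlab * X)
  (l : list ((Mlab * X) * (Mlab * X))) : Prop :=
  match l with
  | nil => False
  | (p, q) :: l' =>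
      teq X a p /\
      match l' with
      | nil => teq X q b
      | _ => walk X q b l'
      end
  end.

Definition chain_cost (X : M3data) (l : list ((Mlab * X) * (Mlab * X))) : R :=
  fold_right (fun pq acc => dprod X (fst pq) (snd pq) + acc) 0 l.

Definition tdist (X : M3data) (A B : tens X) : R :=
  inf [set r | exists a b l, proj1_sig A a /\ proj1_sig B b /\
                  walk X a b l /\ r = chain_cost X l].

Definition Fmap (X Y : M3data) (f : X -> Y) (A : tens X) : tens Y :=
  let p := proj1_sig (cid (proj2_sig A)) in tpt Y (fst p) (f (snd p)).

Definition is_coalg (X : M3data) (e : X -> tens X) : Prop :=
  isMet3 X /\ lipschitz X (tens X) (mdist X) (tdist X) e /\
  e (mT X) = tpt X ma (mT X) /\ e (mL X) = tpt X mb (mL X) /\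
  e (mR X) = tpt X mc (mR X).

Definition coalg_hom (Y : M3data) (g : Y -> tens Y)
  (X : M3data) (e : X -> tens X) (h : Y -> X) : Prop :=
  met3_morph Y X h /\ forall y, e (h y) = Fmap Y X h (g y).

Definition final_coalg (X : M3data) (e : X -> tens X) : Prop :=
  forall (Y : M3data) (g : Y -> tens Y), is_coalg Y g ->
    exists h : Y -> X, coalg_hom Y g X e h /\
      forall h' : Y -> X, coalg_hom Y g X e h' -> h' = h.

Definition sier_map (m : Mlab) (p : R * R) : R * R :=
  match m with
  | ma => (fst p / 2 + / 4, snd p / 2 + sqrt 3 / 4)
  | mb => (fst p / 2, snd p / 2)
  | mc => (fst p / 2 + / 2, snd p / 2)
  end.

Definition ifs_invariant (K : set (R * R)) : Prop :=
  forall p, K p <-> exists m q, K q /\ p = sier_map m q.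

(* the unique nonempty compact invariant set (Hutchinson), described as the
   intersection of all nonempty compact invariant sets *)
Definition inS (p : R * R) : Prop :=
  forall K : set (R * R), compact K -> (exists q, K q) -> ifs_invariant K -> K p.

Definition Sg : Type := { p : R * R | inS p }.

Definition eucl (s t : Sg) : R :=
  sqrt ((fst (proj1_sig s) - fst (proj1_sig t)) ^ 2 +
        (snd (proj1_sig s) - snd (proj1_sig t)) ^ 2).

Definition SG (T L Rt : Sg) : M3data := Build_M3data Sg eucl T L Rt.

(* Main.v *)
Require Import Defs.
From Stdlib Require Import Reals Lra ProofIrrelevance Relations.
From mathcomp Require Import all_boot all_classical all_reals all_analysis.
From mathcomp Require Import all_algebra Rstruct Rstruct_topology.
Local Open Scope classical_set_scope.
Local Open Scope R_scope.

Lemma ballR (x y e : R) : ball x e y <-> Rabs (x - y) < e.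
Proof.
rewrite /ball /= -RabsE; split; [by move/RltP|by move/RltP].
Qed.

Lemma ballRR (x y : R * R) e : ball x e y <->
  Rabs (fst x - fst y) < e /\ Rabs (snd x - snd y) < e.
Proof.
split.
- by move=> [/ballR h1 /ballR h2].
- by move=> [h1 h2]; split; apply/ballR.
Qed.

Lemma RR_hausdorff : hausdorff_space (R * R)%type.
Proof.
move=> p q cl.
have H : forall e, 0 < e -> exists z : R*R, ball p e z /\ ball q e z.
  move=> e he.
  have [z [Hz1 Hz2]] := cl _ _ (nbhsx_ballx p e (introT RltP he))
                          (nbhsx_ballx q e (introT RltP he)).
  by exists z.
have E : forall a b : R, (forall e, 0 < e -> Rabs (a - b) < e) -> a = b.
  move=> a b Hab; apply: Rminus_diag_uniq; apply: Rnorm0_eq0.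
  case: (Rle_lt_or_eq_dec 0 (Rabs (a - b)) (Rabs_pos _)) => // h.
  have := Hab _ h; lra.
case: p q cl H => p1 p2 [q1 q2] _ H; congr pair; apply: E => e he.
- have [z [/ballRR [h1 _] /ballRR [h2 _]]] := H (e/2) ltac:(lra).
  simpl in *. rewrite -Rabs_Ropp in h2.
  have := Rabs_triang (p1 - z.1) (- (q1 - z.1)).
  replace (p1 - z.1 + - (q1 - z.1)) with (p1 - q1) by ring. lra.
- have [z [/ballRR [_ h1] /ballRR [_ h2]]] := H (e/2) ltac:(lra).
  simpl in *. rewrite -Rabs_Ropp in h2.
  have := Rabs_triang (p2 - z.2) (- (q2 - z.2)).
  replace (p2 - z.2 + - (q2 - z.2)) with (p2 - q2) by ring. lra.
Qed.

Lemma half_diff (a b u v e : R) : u - v = (a - b) / 2 -> Rabs (a - b) < e ->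
  Rabs (u - v) < e.
Proof.
move=> ->; rewrite /Rdiv Rabs_mult (Rabs_right (/2)); last lra.
move=> h; have := Rabs_pos (a - b); lra.
Qed.

Lemma sier_cont m : continuous (sier_map m).
Proof.
move=> x; apply/cvg_ballP => e he.
apply: filterS (nbhsx_ballx x e he) => z /ballRR [h1 h2].
apply/ballRR; case: m; case: x h1 h2 => x1 x2; case: z => z1 z2 /= h1 h2;
 (split; [apply: (half_diff _ _ _ _ _ _ h1)|apply: (half_diff _ _ _ _ _ _ h2)]); simpl; field.
Qed.

Definition seg01 : set R := `[(0:R)%R, (1:R)%R].
Definition box : set (R * R) := seg01 `*` seg01.

Lemma boxP p : box p <-> (0 <= fst p <= 1 /\ 0 <= snd p <= 1).
Proof.
rewrite /box /seg01 /setX /= !in_itv /=.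
split.
- by move=> [/andP [/RleP h1 /RleP h2] /andP [/RleP h3 /RleP h4]].
- by move=> [[h1 h2] [h3 h4]]; split; apply/andP; split; apply/RleP.
Qed.

Fixpoint Ls (n : nat) : set (R * R) :=
  match n with
  | O => box
  | S n => (sier_map ma @` Ls n) `|` (sier_map mb @` Ls n) `|` (sier_map mc @` Ls n)
  end.

Lemma Ls_S n p : Ls (S n) p <-> exists m q, Ls n q /\ p = sier_map m q.
Proof.
split.
- by move=> [[[q hq <-]|[q hq <-]]|[q hq <-]]; eexists; eexists; split; eauto.
- move=> [[] [q [hq ->]]]; [left; left|left; right|right]; by exists q.
Qed.

Lemma Ls_compact n : compact (Ls n).
Proof.
elim: n => [|n IH] /=.
  by apply: compact_setX; exact: segment_compact.
have cm m : compact (sier_map m @` Ls n).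
  by apply: continuous_compact => //; apply: continuous_subspaceT; exact: sier_cont.
by repeat apply: compactU.
Qed.

Definition K0 : set (R * R) := \bigcap_(n in [set: nat]) Ls n.

Lemma sqrt3_bounds : 1 < sqrt 3 < 2.
Proof.
split.
- rewrite -sqrt_1; apply: sqrt_lt_1_alt; lra.
- rewrite -(sqrt_pow2 2); last lra; apply: sqrt_lt_1_alt; lra.
Qed.

Lemma Ls1_sub p : Ls 1 p -> box p.
Proof.
move/Ls_S=> [m [q [/boxP [[h1 h2] [h3 h4]] ->]]]; apply/boxP.
have := sqrt3_bounds; case: m => /=; lra.
Qed.

Lemma Ls_decr n p : Ls (S n) p -> Ls n p.
Proof.
elim: n p => [|n IH] p; first exact: Ls1_sub.
move/Ls_S => [m [q [hq ->]]]; apply/Ls_S; exists m, q; split => //; exact: IH.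
Qed.

Lemma K0_compact : compact K0.
Proof.
apply: (subclosed_compact _ (Ls_compact 0)).
  apply: closed_bigI => n _; apply: compact_closed; [exact: RR_hausdorff|exact: Ls_compact].
by move=> p hp; exact: (hp 0%N I).
Qed.

Lemma K0_fwd m q : K0 q -> K0 (sier_map m q).
Proof.
move=> hq n _; case: n => [|n]; last by apply/Ls_S; exists m, q; split => //; exact: hq.
apply: Ls1_sub; apply/Ls_S; exists m, q; split => //; exact: hq.
Qed.

Lemma sier_inj m q q' : sier_map m q = sier_map m q' -> q = q'.
Proof.
case: q q' => q1 q2 [q1' q2']; case: m => /= [[h1 h2]|[h1 h2]|[h1 h2]];
 congr pair; lra.
Qed.

Lemma Ls_le n N p : (n <= N)%N -> Ls N p -> Ls n p.
Proof.
move=> /subnK <-; elim: (N - n)%N p => [|k IH] p h //.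
apply: IH; exact: (Ls_decr (k + n) p h).
Qed.

Lemma K0_bwd p : K0 p -> exists m q, K0 q /\ p = sier_map m q.
Proof.
move=> hp.
have key : forall m, (forall n, exists q, Ls n q /\ p = sier_map m q) ->
    exists m q, K0 q /\ p = sier_map m q.
  move=> m H; have [q0 [_ e0]] := H 0%N; exists m, q0; split => // n _.
  have [q [hq e]] := H n; rewrite e0 in e; by rewrite (sier_inj _ _ _ e).
case: (Classical_Prop.classic (forall n, exists q, Ls n q /\ p = sier_map ma q))
  => [H|Ha]; first exact: key H.
case: (Classical_Prop.classic (forall n, exists q, Ls n q /\ p = sier_map mb q))
  => [H|Hb]; first exact: key H.
case: (Classical_Prop.classic (forall n, exists q, Ls n q /\ p = sier_map mc q))
  => [H|Hc]; first exact: key H.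
case: (Classical_Pred_Type.not_all_ex_not _ _ Ha) => na Ha'.
case: (Classical_Pred_Type.not_all_ex_not _ _ Hb) => nb Hb'.
case: (Classical_Pred_Type.not_all_ex_not _ _ Hc) => nc Hc'.
have := hp (S (na + nb + nc)) I; move/Ls_S => [m [q [hq e]]].
case: m e => e.
- by exfalso; apply: Ha'; exists q; split => //; apply: Ls_le hq; rewrite -addnA leq_addr.
- by exfalso; apply: Hb'; exists q; split => //; apply: Ls_le hq;
    rewrite addnAC leq_addl.
- by exfalso; apply: Hc'; exists q; split => //; apply: Ls_le hq; rewrite leq_addl.
Qed.

Lemma half_abs (a b u v : R) : u - v = (a - b) / 2 -> Rabs (u - v) = Rabs (a - b) / 2.
Proof.
move=> ->; rewrite /Rdiv Rabs_mult (Rabs_right (/2)) //; lra.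
Qed.

Lemma half_le (a b u v B : R) : Rabs (a - b) <= B -> u - v = (a - b) / 2 ->
  Rabs (u - v) <= / 2 * B.
Proof. move=> h /half_abs ->; lra. Qed.

Lemma K0_sub K : compact K -> (exists q, K q) -> ifs_invariant K ->
  forall p, K0 p -> K p.
Proof.
move=> cK [[q1 q2] Kq] inv p hp.
have clK := compact_closed RR_hausdorff cK.
set M := 1 + Rabs q1 + Rabs q2.
have approx : forall n p, Ls n p -> exists q', K q' /\
    Rabs (fst p - fst q') <= M * (/2)^n /\ Rabs (snd p - snd q') <= M * (/2)^n.
  elim => [|n IH] p0.
    case: p0 => a b /boxP /= [[h1 h2] [h3 h4]]; exists (q1, q2); split => //=.
    rewrite Rmult_1_r /M.
    have t1 := Rabs_triang a (- q1); rewrite Rabs_Ropp in t1.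
    have t2 := Rabs_triang b (- q2); rewrite Rabs_Ropp in t2.
    rewrite (Rabs_right a) in t1; last lra.
    rewrite (Rabs_right b) in t2; last lra.
    have := Rabs_pos q1; have := Rabs_pos q2.
    rewrite /Rminus => ? ?; split; lra.
  move/Ls_S => [m [p1 [hp1 ->]]].
  have [r1 [Kr1 [d1 d2]]] := IH p1 hp1.
  exists (sier_map m r1); split.
    by apply/inv; exists m, r1.
  rewrite (_ : M * (/2)^n.+1 = /2 * (M * (/2)^n)); last by simpl; ring.
  case: p1 hp1 d1 d2 => a b _; case: r1 Kr1 => c d _ /= d1 d2.
  by case: m; split; [apply: (half_le _ _ _ _ _ d1)|apply: (half_le _ _ _ _ _ d2)
    |apply: (half_le _ _ _ _ _ d1)|apply: (half_le _ _ _ _ _ d2)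
    |apply: (half_le _ _ _ _ _ d1)|apply: (half_le _ _ _ _ _ d2)]; simpl; field.
apply: clK => B /nbhs_ballP [e /RltP he sub].
have hM : 0 < M by rewrite /M; have := Rabs_pos q1; have := Rabs_pos q2; lra.
have h2 : Rabs (/2) < 1 by rewrite Rabs_right; lra.
have {}he : 0 < e by rewrite R0E.
have heM : 0 < e / M. apply: Rdiv_lt_0_compat; lra.
have [N HN] := pow_lt_1_zero (/2) h2 (e / M) heM.
have {HN} HN := HN N (le_n _).
rewrite Rabs_right in HN; last by apply: Rle_ge; apply: pow_le; lra.
have [q' [Kq' [d1 d2]]] := approx N p (hp N I).
exists q'; split => //; apply: sub; apply/ballRR.
have : M * (/2)^N < e.
  have := Rmult_lt_compat_l M _ _ hM HN.
  by rewrite /Rdiv -Rmult_assoc (Rmult_comm M e) Rmult_assoc Rinv_r ?Rmult_1_r; lra.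
move=> h; split; [exact: Rle_lt_trans d1 h|exact: Rle_lt_trans d2 h].
Qed.

Lemma inS_K0 p : inS p <-> K0 p.
Proof.
split.
- move=> h; apply: h.
  + exact: K0_compact.
  + exists (0, 0) => n _; elim: n => [|n IH].
      apply/boxP; simpl; lra.
    apply/Ls_S; exists mb, (0, 0); split => //=; congr pair; lra.
  + move=> p0; split; first exact: K0_bwd.
    by move=> [m [q [hq ->]]]; apply: K0_fwd.
- move=> h K cK ne inv; exact: K0_sub.
Qed.

Lemma inS_bwd p : inS p -> exists m q, inS q /\ p = sier_map m q.
Proof.
move/inS_K0/K0_bwd => [m [q [hq e]]]; exists m, q; split => //; exact/inS_K0.
Qed.

Lemma inS_fwd m q : inS q -> inS (sier_map m q).
Proof. by move/inS_K0 => h; apply/inS_K0; apply: K0_fwd. Qed.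

Lemma tpt_eq (X : M3data) u v : teq X u v -> tpt X u.1 u.2 = tpt X v.1 v.2.
Proof.
case: u v => a b [c d] /= h; rewrite /tpt; apply: subset_eq_compat.
apply: funext => w; apply: propext; split => hw.
- apply: rst_trans (rst_sym _ _ _ _ h) hw.
- exact: rst_trans h hw.
Qed.

Lemma tpt_teq (X : M3data) m x m' x' : tpt X m x = tpt X m' x' -> teq X (m, x) (m', x').
Proof.
move=> /(f_equal (@proj1_sig _ _)) /= E; rewrite E; exact: rst_refl.
Qed.

Lemma teq_map (X Y : M3data) (f : X -> Y) :
  f (mT X) = mT Y -> f (mL X) = mL Y -> f (mR X) = mR Y ->
  forall u v, teq X u v -> teq Y (u.1, f u.2) (v.1, f v.2).
Proof.
move=> hT hL hR u v; elim => {u v}.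
- move=> u v [] /=; rewrite ?hT ?hL ?hR; apply: rst_step; constructor.
- move=> u; exact: rst_refl.
- move=> u v _ IH; exact: rst_sym.
- move=> u v w _ IH1 _ IH2; exact: rst_trans IH1 IH2.
Qed.

Lemma Fmap_tpt (X Y : M3data) (f : X -> Y) m x :
  f (mT X) = mT Y -> f (mL X) = mL Y -> f (mR X) = mR Y ->
  Fmap X Y f (tpt X m x) = tpt Y m (f x).
Proof.
move=> hT hL hR; rewrite /Fmap.
case: (cid _) => p /= hp.
have h : teq X (m, x) p by rewrite hp; exact: rst_refl.
have H := teq_map X Y f hT hL hR _ _ h; simpl in H.
exact: (tpt_eq Y _ _ (rst_sym _ _ _ _ H)).
Qed.

Lemma mdist_ge0 (X : M3data) : isMet3 X -> forall x y, 0 <= Defs.mdist X x y.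
Proof.
move=> [h0 [hs [ht _]]] x y.
have := ht x y x; rewrite (hs y x); have := proj2 (h0 x x) erefl; lra.
Qed.

Lemma tdist_le (X : M3data) : isMet3 X -> forall m x m' x',
  tdist X (tpt X m x) (tpt X m' x') <= dprod X (m, x) (m', x').
Proof.
move=> hX m x m' x'.
have dp0 : forall p q, 0 <= dprod X p q.
  move=> p q; rewrite /dprod; case: (Mlab_eq_dec p.1 q.1) => _ /=; last lra.
  have := mdist_ge0 X hX p.2 q.2. lra.
have cc0 : forall l, 0 <= chain_cost X l.
  elim => [|pq l IH] /=; first lra.
  have := dp0 pq.1 pq.2; lra.
rewrite -(Rplus_0_r (dprod _ _ _)).
apply/RleP; apply: ge_inf.
  exists 0 => r [a [b [l [_ [_ [_ ->]]]]]]; apply/RleP; exact: cc0.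
exists (m, x), (m', x'), [:: ((m, x), (m', x'))]; split; first exact: rst_refl.
split; first exact: rst_refl.
by split => //; split; exact: rst_refl.
Qed.

Inductive Ypt : Type := YT | YL | Yn of nat.

Definition ypos (x : Ypt) : R :=
  match x with YT => 0 | YL => 0 | Yn n => (/4) ^ n end.

Definition ydist (x y : Ypt) : R :=
  match x, y with
  | YT, YT => 0
  | YT, _ => 1
  | _, YT => 1
  | _, _ => Rabs (ypos x - ypos y)
  end.

Definition Ydata : M3data := Build_M3data Ypt ydist YT YL (Yn 0).

Lemma q4_bounds n : 0 < (/4) ^ n <= 1.
Proof.
elim: n => [|n [h1 h2]] /=; first lra.
split; nra.
Qed.

Lemma q4_inj n m : (/4) ^ n = (/4) ^ m -> n = m.
Proof.
rewrite !pow_inv => h.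
have h' : 4 ^ n = 4 ^ m.
  have := q4_bounds n; have := q4_bounds m; rewrite !pow_inv => h1 h2.
  rewrite -(Rinv_inv (4 ^ n)) -(Rinv_inv (4 ^ m)) h //.
case: (PeanoNat.Nat.lt_total n m) => [lt|[//|lt]].
- by have := Rlt_pow 4 n m ltac:(lra) lt; lra.
- by have := Rlt_pow 4 m n ltac:(lra) lt; lra.
Qed.

Lemma yP x : 0 <= ypos x <= 1.
Proof. case: x => [||n] /=; try lra; have := q4_bounds n; lra. Qed.

Lemma Y_sep (x y : Ypt) : ydist x y = 0 <-> x = y.
Proof.
split; last by move=> <-; case: x => //= *; rewrite Rminus_eq_0 Rabs_R0.
case: x => [||n]; case: y => [||k] //= h; try lra.
all: have := Rminus_diag_uniq _ _ (Rnorm0_eq0 h) => /= e.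
all: try (have := q4_bounds k; lra).
all: try (have := q4_bounds n; lra).
by rewrite (q4_inj _ _ e).
Qed.

Lemma Y_sym (x y : Ypt) : ydist x y = ydist y x.
Proof. case: x => [||n]; case: y => [||k] //=; exact: Rabs_minus_sym. Qed.

Lemma Y_le1 (x y : Ypt) : ydist x y <= 1.
Proof.
case: x => [||n]; case: y => [||k] /=; try lra.
all: apply: Rabs_le; (try have := q4_bounds n); (try have := q4_bounds k);
  simpl; lra.
Qed.

Lemma Y_ge0 (x y : Ypt) : 0 <= ydist x y.
Proof. case: x => [||n]; case: y => [||k] /=; try lra; exact: Rabs_pos. Qed.

Lemma Y_tri (x y z : Ypt) : ydist x z <= ydist x y + ydist y z.
Proof.
have tri := fun a b c => Rdist_tri a c b.
rewrite /Rdist in tri.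
move: (Y_le1 x z) (Y_ge0 x y) (Y_ge0 y z) (Y_ge0 x z) (Y_le1 x y) (Y_le1 y z).
case: x => [||n]; case: y => [||k]; case: z => [||j] /= *;
  first [lra | exact: tri].
Qed.

Lemma Y_met : isMet3 Ydata.
Proof.
split; first exact: Y_sep.
split; first exact: Y_sym.
split; first exact: Y_tri.
split; first exact: Y_le1.
split => //; split => //=.
rewrite Rminus_0_l Rabs_Ropp Rabs_right; lra.
Qed.

Definition ylab (x : Ypt) : Mlab :=
  match x with YT => ma | YL => mb | Yn 0 => mc | Yn (S _) => mb end.
Definition yprd (x : Ypt) : Ypt :=
  match x with Yn (S n) => Yn n | _ => x end.
Definition yg (x : Ydata) : tens Ydata := tpt Ydata (ylab x) (yprd x).

Lemma yg_lip : Defs.lipschitz Ydata (tens Ydata) (Defs.mdist Ydata) (tdist Ydata) yg.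
Proof.
exists 2; split; first lra.
move=> x y; apply: Rle_trans (tdist_le Ydata Y_met _ _ _ _) _.
have H1 : forall a b c d, c = /4 * a -> d = /4 * b ->
    /2 * Rabs (a - b) <= 2 * Rabs (c - d).
  move=> a b c d -> ->.
  rewrite (_ : /4 * a - /4 * b = /4 * (a - b)); last ring.
  rewrite Rabs_mult (Rabs_right (/4)); last lra.
  have := Rabs_pos (a - b); lra.
have H2 : forall u, (u <= -/2 \/ /2 <= u) -> 1 <= 2 * Rabs u.
  move=> u [h|h]; [rewrite Rabs_left; lra|rewrite Rabs_right; lra].
case: x => [||[|n]]; case: y => [||[|k]]; rewrite /dprod /=.
all: first [lra | (rewrite Rminus_eq_0 Rabs_R0; lra) | (apply: H1; ring)
  | (apply: H2; (try have := q4_bounds n); (try have := q4_bounds k); lra)].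
Qed.

Lemma yg_coalg : is_coalg Ydata yg.
Proof. split; first exact: Y_met. split; first exact: yg_lip. by []. Qed.

Lemma teq_sier (T L Rt : Sg) :
  proj1_sig T = (/ 2, sqrt 3 / 2) -> proj1_sig L = (0, 0) -> proj1_sig Rt = (1, 0) ->
  forall u v, teq (SG T L Rt) u v ->
    sier_map u.1 (proj1_sig u.2) = sier_map v.1 (proj1_sig v.2).
Proof.
move=> hT hL hR u v; elim => {u v}.
- move=> u v [] /=; rewrite ?hT ?hL ?hR /=; congr pair; field.
- by [].
- by move=> u v _ ->.
- by move=> u v w _ -> _ ->.
Qed.

Theorem mainTheorem13 (T L Rt : Sg) (sig : Sg -> tens (SG T L Rt)) :
  proj1_sig T = (/ 2, sqrt 3 / 2) ->
  proj1_sig L = (0, 0) ->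
  proj1_sig Rt = (1, 0) ->
  (forall (s x : Sg) (m : Mlab),
      proj1_sig s = sier_map m (proj1_sig x) -> sig s = tpt (SG T L Rt) m x) ->
  ~ final_coalg (SG T L Rt) sig.
Proof.
move=> hT hL hR hsig Hfin.
have [h [[[[K [hK hlip]] [h0 [h1 h2]]] hcomm] _]] := Hfin Ydata yg yg_coalg.
have pos : forall n, proj1_sig (h (Yn n)) = ((/2) ^ n, 0).
  elim => [|n IH]; first by rewrite /= h2 hR.
  set s := h (Yn n.+1).
  have [m [q [hq e]]] := inS_bwd _ (proj2_sig s).
  have := hsig s (exist _ q hq) m e.
  rewrite hcomm /yg /= Fmap_tpt // => /tpt_teq /(teq_sier T L Rt hT hL hR) /=.
  rewrite IH -e /= => <-; congr pair; field.
have hK1 : 0 < / (K + 1) by apply: Rinv_0_lt_compat; lra.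
have [N HN] := pow_lt_1_zero (/2) ltac:(rewrite Rabs_right; lra) _ hK1.
have {HN} HN := HN N (le_n _).
have tpos : 0 < (/2) ^ N by apply: pow_lt; lra.
rewrite Rabs_right in HN; last lra.
have := hlip (Yn N) YL.
rewrite /= /eucl pos.
change (h (mL Ydata)) with (h YL) in h1; rewrite h1 /= hL /=.
rewrite (_ : ((/ 2) ^ N - 0) ^ 2 + (0 - 0) ^ 2 = ((/2) ^ N) ^ 2); last ring.
rewrite sqrt_pow2; last lra.
rewrite Rminus_0_r Rabs_right; last by have := q4_bounds N; lra.
rewrite (_ : / 4 = / 2 * / 2); last field.
rewrite Rpow_mult_distr.
set t := (/ 2) ^ N in HN tpos *.
move=> H.
have H' : 1 <= K * t.
  apply: (Rmult_le_reg_r t) => //; lra.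
have : t * (K + 1) < 1.
  have := Rmult_lt_compat_r (K + 1) _ _ ltac:(lra) HN.
  rewrite Rinv_l; lra.
nra.
Qed.
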